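(* A bag generation process $P(s\mid y,x)$ is reconstructible if and only if, for every $x\in\mathcal{X}$, the vectors $\mathbf{p}_{1,x},\mathbf{p}_{2,x},\dots,\mathbf{p}_{|\mathcal{Y}|,x}\in\mathbb{R}^{|\mathcal{S}|}$ are linearly independent.
   Context: Let $\mathcal{X}$ be an instance space, $\mathcal{Y}=\{1,\dots,c\}$ a finite label set, and $\mathcal{S}=2^{\mathcal{Y}}=\{s_1,\dots,s_{|\mathcal{S}|}\}$ the set of bags of labels. A bag generation process is a family of conditional probability distributions $P(\cdot\mid y,x)$ on $\mathcal{S}$, one for each $y\in\mathcal{Y}$, $x\in\mathcal{X}$. For $i\in\mathcal{Y}$ and $x\in\mathcal{X}$ let $\mathbf{p}_{i,x}=(P(s_1\mid i,x),P(s_2\mid i,x),\dots,P(s_{|\mathcal{S}|}\mid i,x))^\top\in\mathbb{R}^{|\mathcal{S}|}$. Let $\Delta(\mathcal{Y})$ denote the set of probability distributions on $\mathcal{Y}$. The bag generation process is called reconstructible if for every $x\in\mathcal{X}$ and all $Q_1,Q_2\in\Delta(\mathcal{Y})$, the equality $\sum_{y\in\mathcal{Y}}P(s\mid y,x)Q_1(y)=\sum_{y\in\mathcal{Y}}P(s\mid y,x)Q_2(y)$ for all $s\in\mathcal{S}$ implies $\arg\max_{y\in\mathcal{Y}}Q_1(y)=\arg\max_{y\in\mathcal{Y}}Q_2(y)$ (equality of sets). *)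

(* Defs.v *)
From HB Require Import structures.
From mathcomp Require Import all_boot all_order all_algebra.
From mathcomp Require Import reals.
Set Implicit Arguments. Unset Strict Implicit. Unset Printing Implicit Defensive.
Import Order.TTheory GRing.Theory Num.Theory.
Local Open Scope ring_scope.

(* Labels Y = {1,...,c} are represented by 'I_c; bags S = 2^Y by {set 'I_c}.
   A bag generation process: P x y s = P(s | y, x). *)

Definition is_distr (R : realType) (T : finType) (Q : T -> R) : Prop :=
  (forall t, 0 <= Q t) /\ \sum_(t : T) Q t = 1.

Definition bag_process (R : realType) (X : Type) (c : nat)
  (P : X -> 'I_c -> {set 'I_c} -> R) : Prop :=
  forall x y, is_distr (P x y).

Definition argmax_set (R : realType) (c : nat) (Q : 'I_c -> R) : {set 'I_c} :=
  [set y | [forall y', Q y' <= Q y]].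

Definition reconstructible (R : realType) (X : Type) (c : nat)
  (P : X -> 'I_c -> {set 'I_c} -> R) : Prop :=
  forall (x : X) (Q1 Q2 : 'I_c -> R), is_distr Q1 -> is_distr Q2 ->
    (forall s : {set 'I_c}, \sum_(y < c) P x y s * Q1 y = \sum_(y < c) P x y s * Q2 y) ->
    argmax_set Q1 = argmax_set Q2.

Definition pvec (R : realType) (X : Type) (c : nat)
  (P : X -> 'I_c -> {set 'I_c} -> R) (x : X) (i : 'I_c)
  : 'rV[R]_#|{set 'I_c}| :=
  \row_(j < #|{set 'I_c}|) P x i (enum_val j).

(* Main.v *)
Require Import Defs.
From HB Require Import structures.
From mathcomp Require Import all_boot all_order all_algebra.
From mathcomp Require Import reals.
Import Order.TTheory GRing.Theory Num.Theory.
Local Open Scope ring_scope.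

Lemma free_ordE (R : realType) (c m : nat) (f : 'I_c -> 'rV[R]_m) :
  free [seq f i | i <- enum 'I_c] <->
  (forall k : 'I_c -> R, \sum_(i < c) k i *: f i = 0 -> forall i, k i = 0).
Proof.
have -> : [seq f i | i <- enum 'I_c] = map_tuple f (ord_tuple c) by [].
have E : forall k : 'I_c -> R, \sum_(i < c) k i *: (map_tuple f (ord_tuple c))`_i
    = \sum_(i < c) k i *: f i.
  move=> k; apply: eq_bigr => i _.
  by rewrite /= (nth_map i) ?size_enum_ord // nth_ord_enum.
split => [/freeP H k Hk i | H]; first by apply: H; rewrite E.
by apply/freeP => k; rewrite E; apply: H.
Qed.

Lemma comb0E (R : realType) (X : Type) (c : nat)
  (P : X -> 'I_c -> {set 'I_c} -> R) x (k : 'I_c -> R) :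
  \sum_(i < c) k i *: pvec P x i = 0 <->
  (forall s, \sum_(i < c) k i * P x i s = 0).
Proof.
split => [H s | H].
  have := congr1 (fun M : 'rV[R]_#|{set 'I_c}| => M 0 (enum_rank s)) H.
  rewrite /= summxE mxE => E; rewrite -[RHS]E; apply: eq_bigr => i _.
  by rewrite !mxE enum_rankK.
apply/rowP => j; rewrite summxE mxE -[RHS](H (enum_val j)).
by apply: eq_bigr => i _; rewrite !mxE.
Qed.

Theorem theorem1 (R : realType) (X : Type) (c : nat)
  (P : X -> 'I_c -> {set 'I_c} -> R) :
  bag_process P ->
  (reconstructible P <->
   forall x : X, free [seq pvec P x i | i <- enum 'I_c]).
Proof.
move=> HP; split => [Hrec x | Hfree].
- apply/free_ordE => k /comb0E Hk i0.
  have sumk : \sum_(i < c) k i = 0.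
    have : \sum_(s : {set 'I_c}) \sum_(i < c) k i * P x i s = 0.
      by rewrite big1 // => s _; apply: Hk.
    rewrite exchange_big /= => E; rewrite -[RHS]E; apply: eq_bigr => i _.
    by rewrite -mulr_sumr (proj2 (HP x i)) mulr1.
  have c0 : (0 < c)%N by apply: leq_ltn_trans (leq0n _) (ltn_ord i0).
  have cn0 : (c%:R : R) != 0 by rewrite pnatr_eq0 -lt0n.
  pose u : R := c%:R^-1.
  have u0 : 0 < u by rewrite /u invr_gt0 ltr0n.
  pose M : R := 1 + \sum_(i < c) `|k i|.
  have M0 : 0 < M by rewrite /M ltr_pwDl // sumr_ge0.
  have kM : forall y, `|k y| <= M.
    move=> y; rewrite /M (bigD1 y) //= addrCA lerDl.
    by rewrite addr_ge0 // sumr_ge0.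
  pose t : R := u / M.
  have t0 : 0 < t by rewrite /t divr_gt0.
  pose Q1 : 'I_c -> R := fun _ => u.
  pose Q2 : 'I_c -> R := fun y => u + t * k y.
  have sQ1 : \sum_(i < c) Q1 i = 1.
    by rewrite /Q1 sumr_const card_ord -mulr_natr mulVf.
  have D1 : is_distr Q1 by split => // t'; apply: ltW.
  have D2 : is_distr Q2.
    split.
      move=> y; rewrite /Q2.
      have -> : u + t * k y = u / M * (M + k y).
        by rewrite /t mulrDr divfK ?gt_eqF.
      apply: mulr_ge0; first by apply: ltW.
      have := kM y; rewrite -subr_ge0 => H.
      apply: le_trans H _; rewrite lerD2l.
      by rewrite -lerNl -normrN ler_norm.
    by rewrite big_split /= -mulr_sumr sumk mulr0 addr0.
  have := Hrec x Q1 Q2 D1 D2.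
  have Heq : forall s, \sum_(y < c) P x y s * Q1 y = \sum_(y < c) P x y s * Q2 y.
    move=> s; rewrite /Q2.
    under [RHS]eq_bigr => y _ do rewrite mulrDr.
    rewrite big_split /=.
    have -> : \sum_(i < c) P x i s * (t * k i) = 0.
      rewrite -[RHS](mulr0 t) -[in RHS](Hk s) mulr_sumr; apply: eq_bigr => i _.
      by rewrite mulrCA (mulrC (k i)).
    by rewrite addr0.
  move=> /(_ Heq) Hset.
  have allmax : forall y y', k y' <= k y.
    move=> y y'.
    have : y \in argmax_set Q2.
      rewrite -Hset inE; apply/forallP => z; by rewrite /Q1.
    rewrite inE => /forallP /(_ y'); rewrite /Q2 lerD2l.
    by rewrite ler_pM2l.
  have kc : forall y, k y = k i0.
    by move=> y; apply/eqP; rewrite eq_le !allmax.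
  move: sumk; under eq_bigr => y _ do rewrite kc.
  rewrite sumr_const card_ord => /eqP; rewrite mulrn_eq0 => /orP[|/eqP //].
  by move=> /eqP c00; rewrite c00 in c0.
- move=> x Q1 Q2 D1 D2 Heq.
  have H := proj1 (@free_ordE R c _ (pvec P x)) (Hfree x).
  have k0 := H (fun y => Q1 y - Q2 y).
  have E : forall y, Q1 y = Q2 y.
    move=> y; apply/eqP; rewrite -subr_eq0; apply/eqP; apply: k0.
    apply/comb0E => s.
    under eq_bigr => i _ do rewrite mulrBl.
    by rewrite sumrB; apply/eqP; rewrite subr_eq0; apply/eqP;
      rewrite (eq_bigr _ (fun i _ => mulrC _ _)) Heq;
      apply: eq_bigr => i _; rewrite mulrC.
  by apply/setP => y; rewrite !inE; apply: eq_forallb => z; rewrite !E.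
Qed.
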